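(* Let $P=\{x\in\mathbb{R}^n: Ax\ge b\}$ be full-dimensional and pointed, $\mathcal{I}\subseteq\{1,\dots,n\}$, $P_I=\{x\in P:x_j\in\mathbb{Z}\ \forall j\in\mathcal{I}\}$, and $c\in\mathbb{R}^n$. Let $\mathcal{T}$ be finite and $P^t=\{x\in P:D^tx\ge D^t_0\}$, $t\in\mathcal{T}$, the terms of a disjunction with $P_I\subseteq\operatorname{cl}\operatorname{conv}(\bigcup_tP^t)$. For each $t\in\mathcal{T}$, let $\mathcal{P}^t$ consist of an optimal (vertex) solution $p^t$ to $\min\{c^\top x:x\in P^t\}$ together with one point on each of the edges of $P^t$ emanating from $p^t$. Let $\mathcal{P}=\bigcup_t\mathcal{P}^t$ and $\mathcal{R}=\emptyset$. Then any $(\alpha,\beta)$ satisfying $\alpha^\top p\ge\beta$ for all $p\in\mathcal{P}$ and additionally $\alpha^\top p^t=\beta$ for all $t\in\mathcal{T}$ yields an inequality $\alpha^\top x\ge\beta$ that is valid for $P_I$. *)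

(* Defs.v *)
(* Vectors of R^n are column vectors 'cV[R]_n,
   R : realType; the topology on 'cV[R]_n is the canonical (product/max-norm) one. *)
From HB Require Import structures.
From mathcomp Require Import all_boot all_order all_algebra.
From mathcomp Require Import all_classical all_reals all_analysis.
Set Implicit Arguments. Unset Strict Implicit. Unset Printing Implicit Defensive.
Import Order.TTheory GRing.Theory Num.Theory.
Import numFieldTopology.Exports numFieldNormedType.Exports.
Local Open Scope ring_scope.
Local Open Scope classical_set_scope.

Section Polyhedra.
Variable R : realType.

Definition dotv (n : nat) (a x : 'cV[R]_n) : R := \sum_(i < n) a i 0 * x i 0.

Definition mxge (m n : nat) (M : 'M[R]_(m, n)) (d : 'cV[R]_m) (x : 'cV[R]_n) : Prop :=
  forall i : 'I_m, d i 0 <= (M *m x) i 0.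

Definition polyh (m n : nat) (A : 'M[R]_(m, n)) (b : 'cV[R]_m) : set 'cV[R]_n :=
  [set x | mxge A b x].

Definition convex_hull (n : nat) (S : set 'cV[R]_n) : set 'cV[R]_n :=
  [set x | exists (k : nat) (lam : 'I_k -> R) (y : 'I_k -> 'cV[R]_n),
      (forall i, 0 <= lam i) /\ \sum_(i < k) lam i = 1 /\
      (forall i, S (y i)) /\ x = \sum_(i < k) lam i *: y i].

(* dimension n : Q contains n+1 affinely independent points *)
Definition full_dimensional (n : nat) (Q : set 'cV[R]_n) : Prop :=
  exists (x0 : 'cV[R]_n) (V : 'M[R]_n),
    Q x0 /\ (forall j : 'I_n, Q (x0 + col j V)) /\ V \in unitmx.

Definition pointed (n : nat) (Q : set 'cV[R]_n) : Prop :=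
  ~ exists (x d : 'cV[R]_n), d != 0 /\ forall lam : R, Q (x + lam *: d).

Definition valid_ineq (n : nat) (Q : set 'cV[R]_n) (a : 'cV[R]_n) (beta : R) : Prop :=
  forall x, Q x -> beta <= dotv a x.

Definition face (n : nat) (Q F : set 'cV[R]_n) : Prop :=
  F !=set0 /\ exists (a : 'cV[R]_n) (beta : R),
    valid_ineq Q a beta /\ F = [set x | Q x /\ dotv a x = beta].

(* an edge: a face of (affine) dimension 1, i.e. F has two distinct points
   and is contained in the line through them *)
Definition edge (n : nat) (Q F : set 'cV[R]_n) : Prop :=
  face Q F /\ exists u v : 'cV[R]_n, F u /\ F v /\ u != v /\
    (forall x, F x -> exists lam : R, x = u + lam *: (v - u)).

Definition vertex (n : nat) (Q : set 'cV[R]_n) (p : 'cV[R]_n) : Prop :=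
  face Q [set p].

End Polyhedra.

(* Main.v *)
Require Import Defs.
From HB Require Import structures.
From mathcomp Require Import all_boot all_order all_algebra.
From mathcomp Require Import all_classical all_reals all_analysis.
From mathcomp Require Import lra zify.
Import Order.TTheory GRing.Theory Num.Theory.
Import numFieldTopology.Exports numFieldNormedType.Exports.
Local Open Scope ring_scope.
Local Open Scope classical_set_scope.

Section Aux.
Context {R : realType} {n : nat}.
Implicit Types (a x y z : 'cV[R]_n).

Lemma dotvDr a x y : dotv a (x + y) = dotv a x + dotv a y.
Proof. by rewrite /dotv -big_split; apply: eq_bigr => i _; rewrite mxE mulrDr. Qed.

Lemma dotvZr a k x : dotv a (k *: x) = k * dotv a x.
Proof. by rewrite /dotv mulr_sumr; apply: eq_bigr => i _; rewrite mxE mulrCA. Qed.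

Lemma dotvNr a x : dotv a (- x) = - dotv a x.
Proof. by rewrite -scaleN1r dotvZr mulN1r. Qed.

Lemma dotvBr a x y : dotv a (x - y) = dotv a x - dotv a y.
Proof. by rewrite dotvDr dotvNr. Qed.

Lemma dotv0r a : dotv a 0 = 0.
Proof. by rewrite /dotv big1 // => i _; rewrite mxE mulr0. Qed.

Lemma dotv_sumr a k (f : 'I_k -> 'cV[R]_n) :
  dotv a (\sum_(i < k) f i) = \sum_(i < k) dotv a (f i).
Proof.
rewrite /dotv exchange_big /=; apply: eq_bigr => j _.
by rewrite summxE mulr_sumr.
Qed.

Lemma dotv_suml (I : finType) (S : {set I}) (f : I -> 'cV[R]_n) x :
  dotv (\sum_(i in S) f i) x = \sum_(i in S) dotv (f i) x.
Proof.
rewrite /dotv exchange_big /=; apply: eq_bigr => j _.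
by rewrite summxE mulr_suml.
Qed.

Lemma small_eps (I : finType) (P : pred I) (f : I -> R) :
  (forall i, P i -> 0 < f i) -> exists2 e, 0 < e & forall i, P i -> e <= f i.
Proof.
move=> Hf.
have: forall s : seq I, exists2 e, 0 < e & forall i, i \in s -> P i -> e <= f i.
  elim=> [|j s [e e0 He]]; first by exists 1.
  case Pj: (P j).
    exists (Num.min e (f j)); first by rewrite lt_min e0 Hf.
    move=> i; rewrite inE => /orP[/eqP->|iS] Pi; rewrite ge_min.
      by rewrite lexx orbT.
    by rewrite (He i iS Pi) orTb.
  exists e => // i; rewrite inE => /orP[/eqP->|iS] Pi; last exact: He.
  by rewrite Pj in Pi.
move=> /(_ (enum I)) [e e0 He]; exists e => // i; apply: He; exact: mem_enum.
Qed.

Lemma argmin_ex (I : finType) (P : pred I) (f : I -> R) i0 :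
  P i0 -> exists i, P i /\ forall j, P j -> f i <= f j.
Proof.
move=> Pi0; case: (arg_minP f Pi0) => i Pi Hi; exists i; split => // j Pj; exact: Hi.
Qed.

Lemma dotv_continuous a : continuous (fun x : 'cV[R]_n => dotv a x).
Proof.
rewrite /dotv.
have: forall s : seq 'I_n, continuous (fun x : 'cV[R]_n => \sum_(i <- s) a i 0 * x i 0).
  elim=> [|j s IH].
    have -> : (fun x : 'cV[R]_n => \sum_(i <- [::]) a i 0 * x i 0) = fun=> 0.
      by apply/funext => y; rewrite big_nil.
    exact: cst_continuous.
  have -> : (fun x : 'cV[R]_n => \sum_(i <- j :: s) a i 0 * x i 0) =
     (fun x : 'cV[R]_n => a j 0 * x j 0) + (fun x : 'cV[R]_n => \sum_(i <- s) a i 0 * x i 0).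
    by apply/funext => y; rewrite big_cons.
  move=> x; apply: continuousD; last exact: IH.
  apply: continuousM; first exact: cst_continuous.
  exact: coord_continuous.
by apply.
Qed.

End Aux.
Arguments small_eps {R I P f}.
Arguments argmin_ex {R I P} f {i0}.

Section Key.
Variable R : realType.
Variable n : nat.
Variable I : finType.
Variable a : I -> 'cV[R]_n.
Variable h : I -> R.

Definition Qs := [set x : 'cV[R]_n | forall i, h i <= dotv (a i) x].

Variable p : 'cV[R]_n.
Variable alpha : 'cV[R]_n.
Variable qf : set 'cV[R]_n -> 'cV[R]_n.
Hypothesis vp : vertex Qs p.
Hypothesis Hq : forall E, edge Qs E -> E p ->
  [/\ E (qf E), qf E != p & dotv alpha p <= dotv alpha (qf E)].

Let J i := dotv (a i) p == h i.
Let K y := forall i, J i -> 0 <= dotv (a i) y.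
Let Z y : {set I} := [set i | J i && (dotv (a i) y == 0)]%SET.
Let Good y := K y /\ dotv alpha y < 0.

Lemma Qp : Qs p.
Proof.
case: vp => _ [a0 [b0 [_ Fe]]].
have : [set p] p by [].
by rewrite Fe => -[].
Qed.

Lemma ptd z : (forall i, J i -> dotv (a i) z = 0) -> z = 0.
Proof.
move=> Hz; case: vp => _ [a0 [b0 [va0 Fe]]].
have Fp : [set p] p by [].
rewrite Fe in Fp; case: Fp => _ ap.
have Hpos : forall i, ~~ J i -> 0 < (dotv (a i) p - h i) / (1 + `|dotv (a i) z|).
  move=> i /= nJ; apply: divr_gt0.
    by rewrite subr_gt0 lt_neqAle (Qp i) andbT eq_sym.
  have := normr_ge0 (dotv (a i) z); lra.
have [e e0 He] := small_eps Hpos.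
have Qpm : forall s : R, s = 1 \/ s = -1 -> Qs (p + (s * e) *: z).
  move=> s Hs i; rewrite dotvDr dotvZr.
  case Ji: (J i).
    rewrite Hz //; have := Qp i; lra.
  have := He i (negbT Ji); rewrite ler_pdivlMr; last first.
    have := normr_ge0 (dotv (a i) z); lra.
  have n1 := ler_norm (dotv (a i) z).
  have n2 := ler_norm (- dotv (a i) z); rewrite normrN in n2.
  have m1 := ler_wpM2l (ltW e0) n1; have m2 := ler_wpM2l (ltW e0) n2.
  case: Hs => -> /=; nra.
have h1 := va0 _ (Qpm 1 (or_introl erefl)).
have h2 := va0 _ (Qpm (-1) (or_intror erefl)).
rewrite dotvDr dotvZr in h1; rewrite dotvDr dotvZr in h2.
have E0 : e * dotv a0 z = 0 by nra.
have : [set p] (p + (1 * e) *: z).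
  rewrite Fe; split; first by apply: Qpm; left.
  by rewrite dotvDr dotvZr mul1r E0 addr0.
move=> /= /(congr1 (fun v => v - p)); rewrite addrC addKr subrr => /eqP.
rewrite scaler_eq0 mul1r => /orP[|/eqP//].
by rewrite gt_eqF.
Qed.


Lemma pivot y z : Good y -> (forall i, i \in Z y -> dotv (a i) z = 0) ->
  dotv alpha z = 0 -> z != 0 ->
  exists y', Good y' /\ (#|Z y| < #|Z y'|)%N.
Proof.
move=> [Ky ay] Zz az nz0.
suff Hs : forall z, (forall i, i \in Z y -> dotv (a i) z = 0) -> dotv alpha z = 0 ->
   forall i0, J i0 -> dotv (a i0) z < 0 -> exists y', Good y' /\ (#|Z y| < #|Z y'|)%N.
  case: (boolP [exists i, J i && (dotv (a i) z != 0)]) => [/existsP [i0 /andP[Ji0]]|/existsPn Hn].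
    rewrite neq_lt => /orP[lt|gt].
      exact: (Hs z Zz az i0 Ji0 lt).
    apply: (Hs (- z) _ _ i0 Ji0).
    - by move=> i iZ; rewrite dotvNr Zz ?oppr0.
    - by rewrite dotvNr az oppr0.
    - by rewrite dotvNr oppr_lt0.
  exfalso; move/negP: nz0; apply; apply/eqP; apply: ptd => i Ji.
  by move: (Hn i); rewrite Ji /= negbK => /eqP.
move=> {nz0 Zz az} z Zz az i0 Ji0 lt0.
pose S i := J i && (dotv (a i) z < 0).
pose f i := dotv (a i) y / (- dotv (a i) z).
have Si0 : S i0 by rewrite /S Ji0 lt0.
have [is0 [Sis Hmin]] := argmin_ex f Si0.
have Spos : forall i, S i -> 0 < dotv (a i) y.
  move=> i /andP[Ji lti]; rewrite lt_neqAle Ky // andbT eq_sym.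
  apply/negP => /eqP ay0.
  have : i \in Z y by rewrite inE Ji ay0 eqxx.
  by move/Zz => e; rewrite e ltxx in lti.
pose mu := f is0.
have mu0 : 0 < mu.
  move: Sis => /[dup] /Spos ps /andP[_ lz]; rewrite /mu /f divr_gt0 // oppr_gt0 //.
exists (y + mu *: z); split; first split.
- move=> i Ji; rewrite dotvDr dotvZr.
  case: (ltP (dotv (a i) z) 0) => lz.
    have Si : S i by rewrite /S Ji lz.
    have := Hmin i Si; rewrite /f ler_pdivlMr ?oppr_gt0 // => Hm.
    have := Ky i Ji; rewrite /mu /f in Hm *; lra.
  have := Ky i Ji; have := mulr_ge0 (ltW mu0) lz; lra.
- by rewrite dotvDr dotvZr az mulr0 addr0.
- apply: proper_card; apply/properP; split.
    apply/fintype.subsetP => i; rewrite !inE => /andP[Ji /eqP ay0]; rewrite Ji /=.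
    by rewrite dotvDr dotvZr ay0 Zz ?mulr0 ?addr0 // inE Ji ay0 eqxx.
  case/andP: (Sis) => Jis lis.
  exists is0.
    rewrite inE Jis /= dotvDr dotvZr /mu /f invrN mulrN mulNr divfK ?subrr //.
    by rewrite lt_eqF.
  by rewrite inE Jis /= gt_eqF // Spos.
Qed.

Lemma final y : Good y ->
  (forall z, (forall i, i \in Z y -> dotv (a i) z = 0) -> dotv alpha z = 0 -> z = 0) ->
  False.
Proof.
move=> [Ky ay] Hk.
have y0 : y != 0 by apply/eqP => y0; rewrite y0 dotv0r ltxx in ay.
have ayn : dotv alpha y != 0 by rewrite lt_eqF.
pose E := [set x | Qs x /\ forall i, i \in Z y -> dotv (a i) x = h i].
have Ep : E p.
  split; first exact: Qp.
  by move=> i; rewrite inE => /andP[/eqP ? _].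
have line : forall x, E x -> x = p + (dotv alpha (x - p) / dotv alpha y) *: y.
  move=> x [Qx Zx].
  set c := _ / _.
  have := Hk (x - p - c *: y).
  have H1 : forall i, i \in Z y -> dotv (a i) (x - p - c *: y) = 0.
    move=> i iZ; rewrite !dotvBr dotvZr Zx //.
    by move: iZ; rewrite inE => /andP[/eqP -> /eqP ->]; rewrite mulr0 subrr subr0.
  have H2 : dotv alpha (x - p - c *: y) = 0.
    by rewrite dotvBr dotvZr /c divfK // subrr.
  move=> /(_ H1 H2) /eqP; rewrite subr_eq0 subr_eq => /eqP ->.
  by rewrite addrC.
have Hpos : forall i, dotv (a i) y < 0 ->
    0 < (dotv (a i) p - h i) / (- dotv (a i) y).
  move=> i ly; apply: divr_gt0; last by rewrite oppr_gt0.
  rewrite subr_gt0 lt_neqAle (Qp i) andbT eq_sym.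
  apply/negP => Ji; have := Ky i Ji; lra.
have [e e0 He] := small_eps Hpos.
pose v := p + e *: y.
have Ev : E v.
  split.
    move=> i; rewrite dotvDr dotvZr; case: (ltP (dotv (a i) y) 0) => ly.
      have := He i ly; rewrite ler_pdivlMr ?oppr_gt0 // => H; lra.
    have := Qp i; have := mulr_ge0 (ltW e0) ly; lra.
  move=> i; rewrite inE => /andP[/eqP Ji /eqP ay0].
  by rewrite dotvDr dotvZr ay0 mulr0 addr0.
have Eedge : edge Qs E.
  split.
    split; first by exists p.
    exists (\sum_(i in Z y) a i), (\sum_(i in Z y) h i); split.
      move=> x Qx; rewrite dotv_suml; apply: ler_sum => i _; exact: Qx.
    apply/seteqP; split => x /=.
      move=> [Qx Zx]; split => //; rewrite dotv_suml; apply: eq_bigr => i iZ; exact: Zx.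
    move=> [Qx]; rewrite dotv_suml => /eqP; rewrite -subr_eq0 -sumrB => /eqP H.
    split => // i iZ.
    have Hnn : forall j, j \in Z y -> 0 <= dotv (a j) x - h j.
      by move=> j _; rewrite subr_ge0; exact: Qx.
    by have /eqP := psumr_eq0P Hnn H iZ; rewrite subr_eq0 => /eqP.
  exists p, v; split; [exact: Ep | split; [exact: Ev | split]].
    apply/negP => /eqP /(congr1 (fun w => w - p)); rewrite subrr /v addrAC subrr add0r.
    by move=> /eqP; rewrite eq_sym scaler_eq0 (gt_eqF e0) /= (negbTE y0).
  move=> x Ex; exists ((dotv alpha (x - p) / dotv alpha y) / e).
  rewrite {1}(line x Ex) /v addrAC subrr add0r scalerA divfK // gt_eqF //.
have [Eq qneq qge] := Hq E Eedge Ep.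
have qe := line _ Eq.
move: qe qge qneq Eq; set q := qf E; set c := _ / _ => qe qge qneq Eq.
have c_le : 0 <= c * dotv alpha y.
  by rewrite qe dotvDr dotvZr in qge; lra.
have cn0 : c != 0.
  by apply/negP => /eqP c0; move: qneq; rewrite qe c0 scale0r addr0 eqxx.
have clt : c < 0.
  rewrite lt_neqAle cn0 /=; case: (ltP 0 c) => // hc.
  nra.
apply/negP: y0; apply/negPn/eqP; apply: ptd => i Ji.
case: Eq => Qq _.
have := Qq i; rewrite qe dotvDr dotvZr (eqP Ji) => Hi.
apply/eqP; rewrite eq_le Ky // andbT; nra.
Qed.

Lemma key x : Qs x -> dotv alpha p <= dotv alpha x.
Proof.
move=> Qx; rewrite leNgt; apply/negP => Hlt.
have G0 : Good (x - p).
  split.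
    by move=> i /eqP Ji; rewrite dotvBr Ji subr_ge0; exact: Qx.
  by rewrite dotvBr subr_lt0.
have main : forall k y, Good y -> (#|I| - #|Z y| <= k)%N -> False.
  elim=> [|k IH] y Gy Hk;
  (have [Hall|Hn] := pselect (forall z, (forall i, i \in Z y -> dotv (a i) z = 0) ->
       dotv alpha z = 0 -> z = 0); first exact: final y Gy Hall);
  apply: Hn => z Zz az; apply/eqP; apply: contraT => nz;
  have [y' [Gy' lt]] := pivot y z Gy Zz az nz;
  (have hm : (#|Z y'| <= #|I|)%N by apply: max_card).
    by lia.
  by exfalso; apply: (IH y' Gy'); lia.
exact: (main #|I| _ G0 (leq_subr _ _)).
Qed.

End Key.

Theorem theorem4 (R : realType) (n m : nat) (A : 'M[R]_(m, n)) (b : 'cV[R]_m)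
  (I : {set 'I_n}) (c : 'cV[R]_n)
  (T : finType) (mt : T -> nat)
  (D : forall t : T, 'M[R]_(mt t, n)) (D0 : forall t : T, 'cV[R]_(mt t))
  (p : T -> 'cV[R]_n) (q : T -> set 'cV[R]_n -> 'cV[R]_n)
  (alpha : 'cV[R]_n) (beta : R) :
  let P := polyh A b in
  let PI := [set x | P x /\ forall j, j \in I -> x j 0 \is a Num.int] in
  let Pt := fun t => [set x | P x /\ mxge (D t) (D0 t) x] in
  let calP := \bigcup_(t in [set: T])
      ([set p t] `|` [set q t E | E in [set E | edge (Pt t) E /\ E (p t)]]) in
  full_dimensional P ->
  pointed P ->
  PI `<=` closure (convex_hull (\bigcup_(t in [set: T]) Pt t)) ->
  (forall t, vertex (Pt t) (p t) /\
             (forall x, Pt t x -> dotv c (p t) <= dotv c x)) ->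
  (forall t E, edge (Pt t) E -> E (p t) -> E (q t E) /\ q t E != p t) ->
  (forall y, calP y -> beta <= dotv alpha y) ->
  (forall t, dotv alpha (p t) = beta) ->
  forall x, PI x -> beta <= dotv alpha x.
Proof.
move=> P PI Pt calP _ _ Hcl Hv Hqq Hcal Hp x PIx.
have rowE : forall (k : nat) (M : 'M[R]_(k, n)) i y, (M *m y) i 0 = dotv (row i M)^T y.
  by move=> k M i y; rewrite mxE /dotv; apply: eq_bigr => j _; rewrite !mxE.
have valid : forall t y, Pt t y -> beta <= dotv alpha y.
  move=> t.
  pose a := fun s : ('I_m + 'I_(mt t))%type =>
    match s with inl i => (row i A)^T | inr i => (row i (D t))^T end.
  pose h := fun s : ('I_m + 'I_(mt t))%type =>
    match s with inl i => b i 0 | inr i => D0 t i 0 end.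
  have PtE : Pt t = @Qs R n _ a h.
    apply/seteqP; split => y /=.
      move=> [Py Dy] [i|i] /=; rewrite -rowE; [exact: Py | exact: Dy].
    move=> Hy; split => i; rewrite rowE; [exact: (Hy (inl i)) | exact: (Hy (inr i))].
  move=> y; rewrite PtE -(Hp t) => Qy.
  apply: (@key R n _ a h (p t) alpha (q t)) Qy.
  - rewrite -PtE; exact: (Hv t).1.
  - move=> E; rewrite -PtE => Ee Ep.
    have [Eq qn] := Hqq t E Ee Ep; split => //.
    rewrite Hp; apply: Hcal; exists t => //; right; exists E => //.
have hull : forall y, convex_hull (\bigcup_(t in [set: T]) Pt t) y -> beta <= dotv alpha y.
  move=> y [k [lam [z [l0 [l1 [zS ->]]]]]].
  rewrite dotv_sumr.
  apply: le_trans (_ : \sum_(i < k) lam i * beta <= _).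
    by rewrite -mulr_suml l1 mul1r.
  apply: ler_sum => i _; rewrite dotvZr; apply: ler_wpM2l => //.
  by case: (zS i) => t _ Pz; exact: valid Pz.
have cl : closed [set y : 'cV[R]_n | beta <= dotv alpha y].
  have -> : [set y : 'cV[R]_n | beta <= dotv alpha y] =
      (fun y => dotv alpha y) @^-1` [set r | beta <= r] by [].
  apply: preimage_closed; last exact: closed_ge.
  move=> y _; exact: dotv_continuous.
have : closure [set y | beta <= dotv alpha y] x.
  by apply: (closureS _ (Hcl x PIx)) => y; exact: hull.
by rewrite -(proj1 (closure_id _) cl).
Qed.
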